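(* Let $\rho$ and $\sigma$ be density operators on a finite-dimensional complex Hilbert space $\mathcal{H}$ and let $\alpha>0$, $\alpha\neq 1$. Then the quantum relative $\alpha$-entropy satisfies $S_{\alpha}(\rho\|\sigma)\ge 0$, and $S_{\alpha}(\rho\|\sigma)=0$ if and only if $\rho=\sigma$.
   Context: A density operator is a positive semidefinite operator of unit trace; $\operatorname{supp}(\rho)$ is the span of the eigenvectors of $\rho$ with nonzero eigenvalues. For $\alpha>0$, $\alpha\neq1$, the quantum relative $\alpha$-entropy is $$S_{\alpha}(\rho\|\sigma)=\frac{\alpha}{1-\alpha}\log\operatorname{Tr}(\rho\sigma^{\alpha-1})-\frac{1}{1-\alpha}\log\operatorname{Tr}(\rho^{\alpha})+\log\operatorname{Tr}(\sigma^{\alpha})$$ whenever $\operatorname{supp}(\rho)\subseteq\operatorname{supp}(\sigma)$ (powers of $\sigma$ with negative exponent taken on its support), and $S_{\alpha}(\rho\|\sigma)=+\infty$ otherwise. Conventions: $0\cdot(\pm\infty)=0$, $\log 0=-\infty$, $\log(+\infty)=+\infty$. *)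

(* Defs.v *)
From HB Require Import structures.
From mathcomp Require Import all_boot all_order all_algebra.
From mathcomp Require Import complex.
From mathcomp Require Import reals ereal exp.

Set Implicit Arguments.
Unset Strict Implicit.
Unset Printing Implicit Defensive.

Import Order.TTheory GRing.Theory Num.Theory.
Local Open Scope ring_scope.
Local Open Scope complex_scope.

Section QuantumRenyi.
Variable R : realType.
Local Notation C := R[i].

Definition adjmx m n (A : 'M[C]_(m, n)) : 'M[C]_(n, m) := (map_mx conjc A)^T.

Definition psdmx n (A : 'M[C]_n) : Prop :=
  adjmx A = A /\ forall v : 'rV[C]_n, 0 <= (v *m A *m adjmx v) 0 0.

Definition density n (A : 'M[C]_n) : Prop := psdmx A /\ \tr A = 1.

(* Eigenvalue list of A given by the spectral decomposition
   A = invmx (spectralmx A) *m diag_mx (spectral_diag A) *m spectralmx A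
   (valid for normal, in particular Hermitian, matrices). *)

Definition supp n (A : 'M[C]_n) : 'M[C]_n :=
  (\sum_(i < n | spectral_diag A 0 i != 0) eigenspace A (spectral_diag A 0 i))%MS.

(* scalar power t |-> t^a on the positive reals, and 0 on the rest
   (i.e. the power is taken on the support) *)
Definition cpow (a : R) (z : C) : C :=
  if 0 < complex.Re z then ((powR (complex.Re z) a)%:C)%C else 0.

Definition mxpowR n (A : 'M[C]_n) (a : R) : 'M[C]_n :=
  invmx (spectralmx A) *m diag_mx (map_mx (cpow a) (spectral_diag A))
    *m spectralmx A.

Definition S_alpha n (alpha : R) (rho sigma : 'M[C]_n) : \bar R :=
  if (supp rho <= supp sigma)%MS then
    (alpha / (1 - alpha) * ln (complex.Re (\tr (rho *m mxpowR sigma (alpha - 1))))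
     - 1 / (1 - alpha) * ln (complex.Re (\tr (mxpowR rho alpha)))
     + ln (complex.Re (\tr (mxpowR sigma alpha))))%:E
  else +oo%E.

End QuantumRenyi.

(* Main.v *)
From HB Require Import structures.
From mathcomp Require Import all_boot all_order all_algebra.
From mathcomp Require Import complex sesquilinear spectral.
From mathcomp Require Import reals ereal sequences exp.
From mathcomp Require Import ring lra.
Require Import Defs.
Set Implicit Arguments.
Unset Strict Implicit.
Import Order.TTheory GRing.Theory Num.Theory.
Local Open Scope ring_scope.
Section S.
Variable R : realType.
Implicit Types x y t : R.
Lemma young_pos t x y : 0 < t < 1 -> 0 < x -> 0 < y ->
  x `^ t * y `^ (1 - t) <= t * x + (1 - t) * y /\
  (x != y -> x `^ t * y `^ (1 - t) < t * x + (1 - t) * y).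
Proof.
move=> /andP[t0 t1] x0 y0.
set u := ln x; set v := ln y; set m := t * u + (1 - t) * v.
have -> : x `^ t * y `^ (1 - t) = expR m.
  by rewrite /powR !gt_eqF // -expRD.
have ex : x = expR m * expR (u - m) by rewrite -expRD addrC subrK /u lnK // posrE.
have ey : y = expR m * expR (v - m) by rewrite -expRD addrC subrK /v lnK // posrE.
have em := expR_gt0 m.
have h1 := expR_ge1Dx (u - m). have h2 := expR_ge1Dx (v - m).
have key : t * (u - m) + (1 - t) * (v - m) = 0 by rewrite /m; ring.
split.
  rewrite ex ey.
  have : expR m * (t * expR (u - m) + (1 - t) * expR (v - m)) >= expR m * 1.
    rewrite ler_pM2l //. nra.
  rewrite mulr1 => H; lra.
move=> xy.
have uv : u != v.
  apply: contra xy => /eqP h; apply/eqP; apply: ln_inj; rewrite ?posrE //.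
have um : u - m != 0.
  have -> : u - m = (1 - t) * (u - v) by rewrite /m; ring.
  by rewrite mulf_neq0 // ?subr_eq0 // gt_eqF // subr_gt0.
have h3 := expR_gt1Dx um.
rewrite ex ey.
have : expR m * (t * expR (u - m) + (1 - t) * expR (v - m)) > expR m * 1.
  rewrite ltr_pM2l //. nra.
rewrite mulr1 => H; lra.
Qed.
Lemma young t x y : 0 < t < 1 -> 0 <= x -> 0 <= y ->
  x `^ t * y `^ (1 - t) <= t * x + (1 - t) * y /\
  (x `^ t * y `^ (1 - t) = t * x + (1 - t) * y -> x = y).
Proof.
move=> /[dup] tt /andP[t0 t1] x0 y0.
have t1' : 0 < 1 - t by rewrite subr_gt0.
have tn0 : t != 0 by rewrite gt_eqF.
have t1n0 : 1 - t != 0 by rewrite gt_eqF.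
rewrite le_eqVlt in x0; rewrite le_eqVlt in y0.
case/predU1P: x0 => [<-|x0]; case/predU1P: y0 => [<-|y0].
- by rewrite powR0 // !mul0r !mulr0 addr0; split.
- rewrite powR0 // !mul0r mulr0 add0r; split; first by rewrite mulr_ge0 // ltW.
  move=> /esym/eqP; rewrite mulf_eq0 (negbTE t1n0) /= => /eqP->//.
- rewrite powR0 // !mulr0 addr0; split; first by rewrite mulr_ge0 // ltW.
  move=> /esym/eqP; rewrite mulf_eq0 (negbTE tn0) /= => /eqP->//.
have [h1 h2] := young_pos tt x0 y0; split => // E.
by case: (eqVneq x y) => // /h2; rewrite E ltxx.
Qed.

Lemma powRV x t : 0 <= x -> (x^-1) `^ t = (x `^ t)^-1.
Proof. by move=> x0; rewrite -powR_inv1 // -powRrM mulN1r powRN. Qed.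

Lemma holder (I : finType) (w a b : I -> R) t : 0 < t < 1 ->
  (forall i, 0 <= w i) -> (forall i, 0 <= a i) -> (forall i, 0 <= b i) ->
  0 < \sum_i w i * a i -> 0 < \sum_i w i * b i ->
  \sum_i w i * (a i `^ t * b i `^ (1 - t)) <=
    (\sum_i w i * a i) `^ t * (\sum_i w i * b i) `^ (1 - t) /\
  (\sum_i w i * (a i `^ t * b i `^ (1 - t)) =
    (\sum_i w i * a i) `^ t * (\sum_i w i * b i) `^ (1 - t) ->
   forall i, w i != 0 -> a i = (\sum_i w i * a i) / (\sum_i w i * b i) * b i).
Proof.
move=> tt w0 a0 b0; set Sa := \sum_i _; set Sb := \sum_i _ => Sa0 Sb0.
have [t0 t1] := andP tt.
set x := fun i => a i / Sa; set y := fun i => b i / Sb.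
have x0 i : 0 <= x i by rewrite divr_ge0 // ltW.
have y0 i : 0 <= y i by rewrite divr_ge0 // ltW.
have K : 0 < Sa `^ t * Sb `^ (1 - t) by rewrite mulr_gt0 // powR_gt0.
have E i : x i `^ t * y i `^ (1 - t) =
    a i `^ t * b i `^ (1 - t) / (Sa `^ t * Sb `^ (1 - t)).
  rewrite /x /y !powRM ?invr_ge0 ?(ltW Sa0) ?(ltW Sb0) // !powRV ?(ltW Sa0) ?(ltW Sb0) // invfM; ring.
have S1 : \sum_i w i * (t * x i + (1 - t) * y i) = 1.
  rewrite (eq_bigr (fun i => t / Sa * (w i * a i) + (1 - t) / Sb * (w i * b i))).
    rewrite big_split /= -!mulr_sumr -/Sa -/Sb !mulfVK ?gt_eqF //; ring.
  by move=> i _; rewrite /x /y; ring.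
have L : \sum_i w i * (x i `^ t * y i `^ (1 - t)) <= 1.
  rewrite -[X in _ <= X]S1; apply: ler_sum => i _; apply: ler_wpM2l => //.
  by case: (young tt (x0 i) (y0 i)).
have LE : \sum_i w i * (x i `^ t * y i `^ (1 - t)) =
   (\sum_i w i * (a i `^ t * b i `^ (1 - t))) / (Sa `^ t * Sb `^ (1 - t)).
  rewrite mulr_suml; apply: eq_bigr => i _; rewrite E; ring.
split.
  by move: L; rewrite LE ler_pdivrMr // mul1r.
move=> Heq i wi.
have L1 : \sum_i w i * (x i `^ t * y i `^ (1 - t)) = 1.
  by rewrite LE Heq divff // gt_eqF.
have Z : \sum_i w i * ((t * x i + (1 - t) * y i) - x i `^ t * y i `^ (1 - t)) = 0.
  under eq_bigr do rewrite mulrBr.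
  by rewrite sumrB S1 L1 subrr.
have nn : forall j, true -> 0 <= w j * ((t * x j + (1 - t) * y j) - x j `^ t * y j `^ (1 - t)).
  move=> j _; rewrite mulr_ge0 // subr_ge0.
  by case: (young tt (x0 j) (y0 j)).
have := (psumr_eq0P nn Z) i isT => /eqP.
rewrite mulf_eq0 (negbTE wi) /= subr_eq0 => /eqP/esym.
have [_ H] := young tt (x0 i) (y0 i).
move=> /H; rewrite /x /y => /(congr1 (fun z => z * Sa)).
rewrite mulfVK ?gt_eqF // => ->.
rewrite mulrAC; ring.
Qed.
Definition pw (a x : R) : R := if 0 < x then x `^ a else 0.

Lemma pw_ge0 a x : 0 <= pw a x.
Proof. by rewrite /pw; case: ifP => // _; exact: powR_ge0. Qed.

Lemma pwE a x : a != 0 -> 0 <= x -> pw a x = x `^ a.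
Proof.
move=> a0; rewrite /pw le_eqVlt => /predU1P[<-|->] //.
by rewrite ltxx powR0.
Qed.

Lemma sum_gt0 (I : finType) (F : I -> R) i :
  (forall j, 0 <= F j) -> 0 < F i -> 0 < \sum_j F j.
Proof.
move=> F0 Fi; rewrite lt_def sumr_ge0 // andbT.
rewrite psumr_neq0 //; apply/hasP; exists i => //; exact: mem_index_enum.
Qed.

Lemma exists_gt0 (I : finType) (F : I -> R) :
  (forall j, 0 <= F j) -> \sum_j F j != 0 -> exists i, 0 < F i.
Proof.
move=> F0 /eqP /psumr_neq0P. by case=> // i /andP[_ h]; exists i.
Qed.

Lemma lnPP X Y t s : 0 < X -> 0 < Y ->
  ln (X `^ t * Y `^ s) = t * ln X + s * ln Y.
Proof.
by move=> X0 Y0; rewrite lnM ?posrE ?powR_gt0 // !ln_powR.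
Qed.

Lemma core n (p q : 'I_n -> R) (T : 'I_n -> 'I_n -> R) (al : R) :
  (forall i, 0 <= p i) -> (forall j, 0 <= q j) ->
  \sum_i p i = 1 -> \sum_j q j = 1 ->
  (forall i j, 0 <= T i j) ->
  (forall i, \sum_j T i j = 1) -> (forall j, \sum_i T i j = 1) ->
  (forall i j, 0 < p i -> q j = 0 -> T i j = 0) ->
  0 < al -> al != 1 ->
  let A := \sum_i p i * \sum_j T i j * pw (al - 1) (q j) in
  let B := \sum_i pw al (p i) in
  let C := \sum_j pw al (q j) in
  let E := al / (1 - al) * ln A - 1 / (1 - al) * ln B + ln C in
  0 <= E /\ (E = 0 -> exists c, forall i j, T i j != 0 -> p i = c * q j).
Proof.
move=> p0 q0 sp sq T0 rT cT sT al0 al1 A B C E.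
have aln0 : al != 0 by rewrite gt_eqF.
have pwp i : pw al (p i) = p i `^ al by rewrite pwE.
have pwq j : pw al (q j) = q j `^ al by rewrite pwE.
have [i0 pi0] : exists i, 0 < p i by apply: exists_gt0; rewrite // sp oner_neq0.
have [j0 qj0] : exists j, 0 < q j by apply: exists_gt0; rewrite // sq oner_neq0.
have B0 : 0 < B by apply: (@sum_gt0 _ _ i0) => [j|]; rewrite ?pw_ge0 // pwp powR_gt0.
have C0 : 0 < C by apply: (@sum_gt0 _ _ j0) => [j|]; rewrite ?pw_ge0 // pwq powR_gt0.
have [j1 Tj1] : exists j, 0 < T i0 j by apply: exists_gt0; rewrite // rT oner_neq0.
have qj1 : 0 < q j1.
  rewrite lt_def q0 andbT; apply/eqP => /(sT _ _ pi0) h.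
  by move: Tj1; rewrite h ltxx.
have A0 : 0 < A.
  apply: (@sum_gt0 _ _ i0) => [i|].
    by rewrite mulr_ge0 // sumr_ge0 // => j _; rewrite mulr_ge0 // pw_ge0.
  rewrite mulr_gt0 //; apply: (@sum_gt0 _ _ j1) => [j|].
    by rewrite mulr_ge0 // pw_ge0.
  by rewrite mulr_gt0 // /pw qj1 powR_gt0.
set a := ln A; set b := ln B; set c := ln C.
have al1' : 1 - al != 0 by rewrite subr_eq0 eq_sym.
have EE : E = (al * a - b + (1 - al) * c) / (1 - al).
  by rewrite /E /a /b /c; field.
have sumT (f : 'I_n -> R) : \sum_(z : 'I_n * 'I_n) T z.1 z.2 * f z.1 = \sum_i f i.
  rewrite -(pair_bigA _ (fun i j => T i j * f i)) /=.
  apply: eq_bigr => i _; by rewrite -mulr_suml rT mul1r.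
have sumT' (f : 'I_n -> R) : \sum_(z : 'I_n * 'I_n) T z.1 z.2 * f z.2 = \sum_j f j.
  rewrite -(pair_bigA _ (fun i j => T i j * f j)) /= exchange_big /=.
  apply: eq_bigr => j _; by rewrite -mulr_suml cT mul1r.
have AE : A = \sum_(z : 'I_n * 'I_n) T z.1 z.2 * (p z.1 * pw (al - 1) (q z.2)).
  rewrite -(pair_bigA _ (fun i j => T i j * (p i * pw (al - 1) (q j)))) /=.
  apply: eq_bigr => i _; rewrite mulr_sumr; apply: eq_bigr => j _; ring.
have T0' : forall z : 'I_n * 'I_n, 0 <= T z.1 z.2 by move=> z.
have A0' := A0; have B0' := B0; have C0' := C0.
have := al1; rewrite neq_lt => /orP[alt|agt].
- have tt : 0 < al < 1 by rewrite al0 alt.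
  have pzero : forall i j, T i j != 0 -> q j = 0 -> p i = 0.
    move=> i j Tn qz; apply/eqP; rewrite eq_le p0 andbT leNgt; apply/negP => pp.
    by move: Tn; rewrite (sT _ _ pp qz) eqxx.
  have H := @holder _ (fun z => T z.1 z.2) (fun z => p z.1 * pw (al - 1) (q z.2))
     (fun z => q z.2 `^ al) al tt T0' (fun z => mulr_ge0 (p0 _) (pw_ge0 _ _))
     (fun z => powR_ge0 _ _).
  have SC : \sum_(z : 'I_n * 'I_n) T z.1 z.2 * q z.2 `^ al = C.
    by rewrite (sumT' (fun i => q i `^ al)); apply: eq_bigr => i _; rewrite pwq.
  rewrite -AE SC in H; have [H1 H2] := H A0 C0.
  have SS : \sum_(z : 'I_n * 'I_n) T z.1 z.2 * ((p z.1 * pw (al - 1) (q z.2)) `^ al * (q z.2 `^ al) `^ (1 - al)) = B.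
    transitivity (\sum_(z : 'I_n * 'I_n) T z.1 z.2 * p z.1 `^ al).
      apply: eq_bigr => z _.
      case: (eqVneq (T z.1 z.2) 0) => [->|Tn]; first by rewrite !mul0r.
      congr (_ * _).
      have := q0 z.2; rewrite le_eqVlt => /predU1P[qz|qpos].
        by rewrite (pzero _ _ Tn (esym qz)) mul0r powR0 // mul0r.
      rewrite /pw qpos powRM ?powR_ge0 // -!powRrM -mulrA -powRD.
        have -> : (al - 1) * al + al * (1 - al) = 0 by ring.
        by rewrite powRr0 mulr1.
      by apply/implyP => _; rewrite gt_eqF.
    by rewrite (sumT (fun i => p i `^ al)); apply: eq_bigr => i _; rewrite pwp.
  rewrite SS in H1 H2.
  have lb : b <= al * a + (1 - al) * c.
    by rewrite /b -lnPP // ler_ln // posrE // mulr_gt0 // powR_gt0.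
  split.
    rewrite EE; apply: divr_ge0; last by rewrite subr_ge0 ltW.
    have -> : al * a - b + (1 - al) * c = (al * a + (1 - al) * c) - b by ring.
    by rewrite subr_ge0.
  move=> /eqP; rewrite EE mulf_eq0 invr_eq0 (negbTE al1') orbF => /eqP N0.
  have lb2 : b = al * a + (1 - al) * c.
    rewrite -[b]addr0 -N0; ring.
  have BE2 : B = A `^ al * C `^ (1 - al).
    by apply: ln_inj; rewrite ?posrE ?mulr_gt0 ?powR_gt0 // lnPP.
  exists (A / C) => i j Tij.
  have := H2 BE2 (i, j) Tij => /=.
  have := q0 j; rewrite le_eqVlt => /predU1P[qz|qpos].
    by rewrite (pzero _ _ Tij (esym qz)) -qz mulr0.
  rewrite /pw qpos -(mulr_powRB1 (ltW qpos) al0) mulrA => /mulIf -> //.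
  by rewrite gt_eqF // powR_gt0.
- set t := al^-1.
  have tt : 0 < t < 1 by rewrite invr_gt0 al0 invf_lt1.
  have H := @holder _ (fun z => T z.1 z.2) (fun z => p z.1 `^ al)
     (fun z => q z.2 `^ al) t tt T0' (fun z => powR_ge0 _ _) (fun z => powR_ge0 _ _).
  have SA : \sum_(z : 'I_n * 'I_n) T z.1 z.2 * p z.1 `^ al = B.
    by rewrite (sumT (fun i => p i `^ al)); apply: eq_bigr => i _; rewrite pwp.
  have SC : \sum_(z : 'I_n * 'I_n) T z.1 z.2 * q z.2 `^ al = C.
    by rewrite (sumT' (fun i => q i `^ al)); apply: eq_bigr => i _; rewrite pwq.
  rewrite SA SC in H; have [H1 H2] := H B0 C0.
  have SS : \sum_(z : 'I_n * 'I_n) T z.1 z.2 * ((p z.1 `^ al) `^ t * (q z.2 `^ al) `^ (1 - t)) = A.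
    rewrite AE; apply: eq_bigr => z _; congr (_ * _).
    rewrite -!powRrM /t mulfV // powRr1 // pwE ?subr_eq0 //.
    congr (_ * _); congr (_ `^ _); by field.
  rewrite SS in H1 H2.
  have la : a <= t * b + (1 - t) * c.
    by rewrite /a -lnPP // ler_ln // posrE // mulr_gt0 // powR_gt0.
  have la' : al * a <= b + (al - 1) * c.
    have := ler_wpM2l (ltW al0) la.
    have -> : al * (t * b + (1 - t) * c) = b + (al - 1) * c by rewrite /t; field.
    done.
  split.
    rewrite EE.
    have -> : (al * a - b + (1 - al) * c) / (1 - al) = (b + (al - 1) * c - al * a) / (al - 1).
      by rewrite -mulrNN -invrN; congr (_ * _); [ring | congr (_^-1); ring].
    by apply: divr_ge0; rewrite subr_ge0 // ltW.
  move=> /eqP; rewrite EE mulf_eq0 invr_eq0 (negbTE al1') orbF => /eqP N0.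
  have la2 : a = t * b + (1 - t) * c.
    have h : al * a = b + (al - 1) * c.
      by apply/eqP; rewrite -subr_eq0 -N0; apply/eqP; ring.
    by rewrite -[a](mulKf aln0) h /t; field.
  have AE2 : A = B `^ t * C `^ (1 - t).
    by apply: ln_inj; rewrite ?posrE ?mulr_gt0 ?powR_gt0 // lnPP.
  exists ((B / C) `^ t) => i j Tij.
  have := H2 AE2 (i, j) Tij => /= /(congr1 (fun z => z `^ t)).
  rewrite -powRrM /t mulfV // powRr1 // => ->.
  rewrite powRM ?powR_ge0 ?divr_ge0 ?(ltW B0) ?(ltW C0) //.
  by rewrite -powRrM mulfV // powRr1.
Qed.
End S.

Section M.
Local Open Scope complex_scope.
Variable R : realType.
Local Notation C := R[i].
Lemma conjcE (x : C) : (x^*)%C = (x^*)%R.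
Proof.
have -> : (x^*)%R = ((complex.Re x)%:C + 'i%R * (complex.Im x)%:C)^*%R by rewrite -complexiE -complexE.
rewrite conjC_rect ?complex_real //.
case: x => a b /=; rewrite -complexiE; apply/eqP; rewrite eq_complex /=; simpc.
done.
Qed.

Local Open Scope sesquilinear_scope.

Lemma adjmxE m n (A : 'M[C]_(m, n)) : adjmx A = A ^t*.
Proof. by apply/matrixP => i j; rewrite /adjmx !mxE conjcE. Qed.

Lemma dens_herm n (A : 'M[C]_n) : density A -> A \is hermsymmx.
Proof.
by case=> [[hA _] _]; apply/is_hermitianmxP; rewrite expr0 scale1r -adjmxE hA.
Qed.

Definition ev n (A : 'M[C]_n) i := complex.Re (spectral_diag A 0 i).
Definition Dg n (f : 'I_n -> R) : 'M[C]_n := diag_mx (\row_i (f i)%:C).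

Lemma sd_real n (A : 'M[C]_n) i : density A -> spectral_diag A 0 i = (ev A i)%:C.
Proof.
move=> /dens_herm /hermitian_spectral_diag_real /mxOverP /(_ 0 i) h.
by rewrite /ev RRe_real.
Qed.

Lemma sd_row n (A : 'M[C]_n) : density A -> spectral_diag A = \row_i (ev A i)%:C.
Proof. by move=> dA; apply/rowP => i; rewrite mxE (sd_real _ dA). Qed.

Lemma spec_eq n (A : 'M[C]_n) : density A ->
  A = (spectralmx A)^t* *m Dg (ev A) *m spectralmx A.
Proof.
move=> dA; have /hermitian_normalmx /orthomx_spectralP h := dens_herm dA.
by rewrite {1}h invmx_unitary ?spectral_unitarymx // (sd_row dA).
Qed.

Lemma rowDgM n (f : 'I_n -> R) (M : 'M[C]_n) i :
  row i (Dg f *m M) = (f i)%:C *: row i M.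
Proof. by rewrite row_mul row_diag_mx mxE -scalemxAl -rowE. Qed.

Lemma unit_row n (P : 'M[C]_n) i : P \is unitarymx ->
  (row i P *m (row i P)^t*) 0 0 = 1.
Proof.
move=> /unitarymxP h.
have : (P *m P^t*) i i = 1 by rewrite h mxE eqxx.
by rewrite !mxE => <-; apply: eq_bigr => k _; rewrite !mxE.
Qed.

Lemma ev_ge0 n (A : 'M[C]_n) i : density A -> 0 <= ev A i.
Proof.
move=> dA; have [[_ psd] _] := dA.
set P := spectralmx A.
have PU : P \is unitarymx := spectral_unitarymx A.
have PA : P *m A = Dg (ev A) *m P.
  by rewrite {1}(spec_eq dA) -/P !mulmxA (unitarymxP PU) mul1mx.
have := psd (row i P); rewrite adjmxE -row_mul PA rowDgM -scalemxAl mxE.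
by rewrite unit_row // mulr1 lecR.
Qed.

Lemma tr_conj n (P : 'M[C]_n) (M : 'M[C]_n) : P \is unitarymx ->
  \tr (P^t* *m M *m P) = \tr M.
Proof.
by move=> PU; rewrite mxtrace_mulC mulmxA (unitarymxP PU) mul1mx.
Qed.

Lemma tr_Dg n (f : 'I_n -> R) : \tr (Dg f) = (\sum_i f i)%:C.
Proof. by rewrite /Dg mxtrace_diag rmorph_sum; apply: eq_bigr => i _; rewrite mxE. Qed.

Lemma ev_sum n (A : 'M[C]_n) : density A -> \sum_i ev A i = 1.
Proof.
move=> dA; have [_ trA] := dA.
move: trA; rewrite {1}(spec_eq dA) tr_conj ?spectral_unitarymx // tr_Dg.
by move=> /(congr1 (@complex.Re R)).
Qed.

Lemma cpowE (a x : R) : cpow a (x%:C) = (pw a x)%:C.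
Proof. by rewrite /cpow /pw /=; case: ifP. Qed.

Lemma mxpow_eq n (A : 'M[C]_n) a : density A ->
  mxpowR A a = (spectralmx A)^t* *m Dg (fun i => pw a (ev A i)) *m spectralmx A.
Proof.
move=> dA; rewrite /mxpowR invmx_unitary ?spectral_unitarymx //.
congr (_ *m _ *m _); congr diag_mx; apply/rowP => i.
by rewrite !mxE (sd_real _ dA) cpowE.
Qed.

Lemma adj_mul m n p (A : 'M[C]_(m, n)) (B : 'M[C]_(n, p)) :
  (A *m B)^t* = B^t* *m A^t*.
Proof. by rewrite trmx_mul map_mxM. Qed.

Definition Um n (P Q : 'M[C]_n) := P *m Q^t*.
Definition Tm n (P Q : 'M[C]_n) i j :=
  complex.Re (Um P Q i j * (Um P Q i j)^*%R).

Lemma TmE n (P Q : 'M[C]_n) i j : (Tm P Q i j)%:C = Um P Q i j * (Um P Q i j)^*%R.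
Proof. by rewrite /Tm RRe_real // ger0_real // mul_conjC_ge0. Qed.

Lemma Tm_ge0 n (P Q : 'M[C]_n) i j : 0 <= Tm P Q i j.
Proof. by rewrite -ler0c TmE mul_conjC_ge0. Qed.

Lemma Tm_eq0 n (P Q : 'M[C]_n) i j : (Tm P Q i j == 0) = (Um P Q i j == 0).
Proof.
rewrite -mul_conjC_eq0 -TmE; apply/eqP/eqP => [->|h]; first by rewrite rmorph0.
by apply: complexI; rewrite h rmorph0.
Qed.

Lemma Um_unitary n (P Q : 'M[C]_n) : P \is unitarymx -> Q \is unitarymx ->
  Um P Q \is unitarymx.
Proof. by move=> PU QU; rewrite /Um mul_unitarymx // trmxC_unitary. Qed.

Lemma entry_MMt n (M : 'M[C]_n) i : (M *m M^t*) i i = \sum_j M i j * (M i j)^*%R.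
Proof. by rewrite !mxE; apply: eq_bigr => j _; rewrite !mxE. Qed.

Lemma entry_MtM n (M : 'M[C]_n) j : (M^t* *m M) j j = \sum_i M i j * (M i j)^*%R.
Proof. by rewrite !mxE; apply: eq_bigr => i _; rewrite !mxE mulrC. Qed.

Lemma Tm_row n (P Q : 'M[C]_n) i : P \is unitarymx -> Q \is unitarymx ->
  \sum_j Tm P Q i j = 1.
Proof.
move=> PU QU; apply: complexI; rewrite rmorph_sum rmorph1.
have /unitarymxP/matrixP/(_ i i) := Um_unitary PU QU.
rewrite entry_MMt mxE eqxx mulr1n => <-; apply: eq_bigr => j _; exact: TmE.
Qed.

Lemma Tm_col n (P Q : 'M[C]_n) j : P \is unitarymx -> Q \is unitarymx ->
  \sum_i Tm P Q i j = 1.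
Proof.
move=> PU QU; apply: complexI; rewrite rmorph_sum rmorph1.
have := Um_unitary PU QU; rewrite -trmxC_unitary => /unitarymxP/matrixP/(_ j j).
rewrite trmxCK entry_MtM mxE eqxx mulr1n => <-; apply: eq_bigr => i _; exact: TmE.
Qed.

Lemma tr_DMDM n (M : 'M[C]_n) f g :
  \tr (Dg f *m M *m Dg g *m M^t*) =
  \sum_i (f i)%:C * \sum_j M i j * (M i j)^*%R * (g j)%:C.
Proof.
rewrite /mxtrace; apply: eq_bigr => i _.
rewrite mxE mulr_sumr; apply: eq_bigr => k _.
rewrite mul_mx_diag mul_diag_mx !mxE; ring.
Qed.

Lemma tr_formula n (P Q : 'M[C]_n) f g : P \is unitarymx -> Q \is unitarymx ->
  \tr ((P^t* *m Dg f *m P) *m (Q^t* *m Dg g *m Q)) =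
  (\sum_i f i * \sum_j Tm P Q i j * g j)%:C.
Proof.
move=> PU QU.
have -> : (P^t* *m Dg f *m P) *m (Q^t* *m Dg g *m Q) =
    P^t* *m (Dg f *m Um P Q *m Dg g *m Q) by rewrite /Um !mulmxA.
have QP : Q *m P^t* = (Um P Q)^t* by rewrite /Um adj_mul trmxCK.
rewrite mxtrace_mulC -[_ *m Q *m _]mulmxA QP tr_DMDM rmorph_sum.
apply: eq_bigr => i _; rewrite rmorphM rmorph_sum; congr (_ * _).
by apply: eq_bigr => j _; rewrite rmorphM -TmE.
Qed.

Lemma PA_eq n (A : 'M[C]_n) : density A ->
  spectralmx A *m A = Dg (ev A) *m spectralmx A.
Proof.
move=> dA; have PU := spectral_unitarymx A; set P := spectralmx A.
by rewrite {1}(spec_eq dA) -/P !mulmxA (unitarymxP PU) mul1mx.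
Qed.

Lemma herm_adj n (A : 'M[C]_n) : density A -> A^t* = A.
Proof. by case=> [[hA _] _]; rewrite -adjmxE. Qed.

Lemma supp_row n (A : 'M[C]_n) i : density A -> ev A i != 0 ->
  (row i (spectralmx A) <= supp A)%MS.
Proof.
move=> dA ne; rewrite /supp; apply: (sumsmx_sup i).
  by rewrite (sd_real _ dA) fmorph_eq0.
by apply/eigenspaceP; rewrite -row_mul PA_eq // rowDgM (sd_real _ dA).
Qed.

Lemma supp_ker n (A : 'M[C]_n) j : density A -> ev A j = 0 ->
  (supp A <= kermx ((row j (spectralmx A))^t*))%MS.
Proof.
move=> dA e0; apply/sumsmx_subP => i nz; rewrite sub_kermx.
set l := spectral_diag A 0 i; set E := eigenspace A l.
have E1 : E *m A = l *: E by apply/eigenspaceP; exact: submx_refl.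
have Aw : A *m (row j (spectralmx A))^t* = 0.
  rewrite -{1}(herm_adj dA) -adj_mul -row_mul PA_eq // rowDgM e0 scale0r.
  by rewrite trmx0 map_mx0.
have : l *: (E *m (row j (spectralmx A))^t*) = 0.
  by rewrite scalemxAl -E1 -mulmxA Aw mulmx0.
by move/eqP; rewrite scalemx_eq0 (negbTE nz).
Qed.

Lemma Um_entry n (P Q : 'M[C]_n) i j :
  Um P Q i j = (row i P *m (row j Q)^t*) 0 0.
Proof. by rewrite !mxE; apply: eq_bigr => k _; rewrite !mxE. Qed.

Lemma supp_T n (rho sigma : 'M[C]_n) : density rho -> density sigma ->
  (supp rho <= supp sigma)%MS -> forall i j, 0 < ev rho i -> ev sigma j = 0 ->
  Tm (spectralmx rho) (spectralmx sigma) i j = 0.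
Proof.
move=> dr ds sub i j pi qj; apply/eqP; rewrite Tm_eq0 Um_entry.
have := submx_trans (submx_trans (supp_row dr (lt0r_neq0 pi)) sub) (supp_ker ds qj).
by rewrite sub_kermx => /eqP ->; rewrite mxE.
Qed.

Lemma Dg_comm n (M : 'M[C]_n) f g (c : R) :
  (forall i j, M i j != 0 -> f i = c * g j) -> Dg f *m M = c%:C *: (M *m Dg g).
Proof.
move=> H; apply/matrixP => i j; rewrite mul_diag_mx mul_mx_diag !mxE.
case: (eqVneq (M i j) 0) => [->|nz]; first by rewrite !(mulr0, mul0r).
by rewrite (H i j nz) rmorphM; ring.
Qed.

Lemma eq_case n (rho sigma : 'M[C]_n) (c : R) : density rho -> density sigma ->
  (forall i j, Tm (spectralmx rho) (spectralmx sigma) i j != 0 ->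
     ev rho i = c * ev sigma j) -> rho = sigma.
Proof.
move=> dr ds H.
set P := spectralmx rho; set Q := spectralmx sigma.
have PU : P \is unitarymx := spectral_unitarymx rho.
have QU : Q \is unitarymx := spectral_unitarymx sigma.
have D : Dg (ev rho) *m Um P Q = c%:C *: (Um P Q *m Dg (ev sigma)).
  by apply: Dg_comm => i j nz; apply: H; rewrite Tm_eq0.
have UQ : Um P Q *m Q = P by rewrite /Um mulmxKtV.
have PtU : P^t* *m Um P Q = Q^t*.
  have := PU; rewrite -trmxC_unitary => /unitarymxP; rewrite trmxCK => h.
  by rewrite /Um mulmxA h mul1mx.
have rs : rho = c%:C *: sigma.
  move: D UQ PtU; set U := Um P Q; clearbody U => D UQ PtU.
  rewrite (spec_eq dr) (spec_eq ds) -/P -/Q -{2}UQ.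
  rewrite mulmxA -[P^t* *m _ *m U]mulmxA D -scalemxAr -!scalemxAl.
  by rewrite mulmxA PtU.
have [_ tr1] := dr; have [_ tr2] := ds.
move: tr1; rewrite rs mxtraceZ tr2 mulr1 => c1.
by rewrite c1 scale1r.
Qed.

Lemma Tm_id n (P : 'M[C]_n) i j : P \is unitarymx -> Tm P P i j = (i == j)%:R.
Proof.
move=> PU; apply: complexI; rewrite TmE /Um (unitarymxP PU) mxE.
by case: (i == j); rewrite /= ?(rmorph1, rmorph0, conjC1, conjC0, mulr1, mulr0).
Qed.

End M.

Unset Implicit Arguments.

Theorem lemma3 (R : realType) (n : nat) (rho sigma : 'M[R[i]]_n) (alpha : R) :
  density rho -> density sigma -> 0 < alpha -> alpha != 1 ->
  (0%E <= S_alpha alpha rho sigma)%E /\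
  (S_alpha alpha rho sigma = 0%E <-> rho = sigma).
Proof.
move=> dr ds al0 al1.
set P := spectralmx rho; set Q := spectralmx sigma.
have PU : P \is unitarymx := spectral_unitarymx rho.
have QU : Q \is unitarymx := spectral_unitarymx sigma.
have trA : complex.Re (\tr (rho *m mxpowR sigma (alpha - 1))) =
   \sum_i ev rho i * \sum_j Tm P Q i j * pw (alpha - 1) (ev sigma j).
  by rewrite {1}(spec_eq dr) (mxpow_eq _ ds) tr_formula.
have trB : complex.Re (\tr (mxpowR rho alpha)) = \sum_i pw alpha (ev rho i).
  by rewrite (mxpow_eq _ dr) tr_conj // tr_Dg.
have trC : complex.Re (\tr (mxpowR sigma alpha)) = \sum_i pw alpha (ev sigma i).
  by rewrite (mxpow_eq _ ds) tr_conj // tr_Dg.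
rewrite /S_alpha; case: ifP => sub; last first.
  split; first exact: leey.
  split => // E; move: sub; rewrite E submx_refl //.
rewrite trA trB trC.
have := @core R n (ev rho) (ev sigma) (Tm P Q) alpha (fun i => ev_ge0 i dr)
  (fun i => ev_ge0 i ds) (ev_sum dr) (ev_sum ds) (@Tm_ge0 _ _ P Q)
  (fun i => Tm_row i PU QU) (fun j => Tm_col j PU QU) (supp_T dr ds sub) al0 al1.
move=> /= [E0 Eeq].
split; first by rewrite lee_fin.
split.
  by move=> [/Eeq [c Hc]]; apply: (eq_case dr ds Hc).
move=> E; subst sigma; rewrite /Q -/P.
have Aeq : \sum_i ev rho i * \sum_j Tm P P i j * pw (alpha - 1) (ev rho j) =
    \sum_i pw alpha (ev rho i).
  apply: eq_bigr => i _; rewrite (bigD1 i) //= Tm_id // eqxx mul1r big1 ?addr0.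
    have := ev_ge0 i dr; rewrite /pw le_eqVlt => /predU1P[<-|pp].
      by rewrite mul0r ltxx.
    by rewrite pp mulr_powRB1 // ltW.
  by move=> j ji; rewrite Tm_id // eq_sym (negbTE ji) mul0r.
rewrite Aeq; congr EFin.
have a1 : 1 - alpha != 0 by rewrite subr_eq0 eq_sym.
by field.
Qed.
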